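(* Let $w \in S_n$. If $w$ contains a $231$ pattern, then the Schubert polynomial $\mathfrak{S}_w$ is not a complete homogeneous monomial.
   Context: $h^i_j$ is the complete homogeneous symmetric polynomial of degree $j$ in $x_1,\dots,x_i$; a complete homogeneous monomial is a product $h^1_{a_1}h^2_{a_2}\cdots$ with nonnegative integers $a_i$, finitely many nonzero. Schubert polynomials: $\mathfrak{S}_{w_0} = x_1^{n-1}\cdots x_{n-1}$ for the longest $w_0 \in S_n$, and $\partial_i\mathfrak{S}_w = \mathfrak{S}_{ws_i}$ if $\ell(ws_i)=\ell(w)-1$, $0$ otherwise, where $\partial_i f = (f-s_if)/(x_i-x_{i+1})$. $w$ contains a $231$ pattern if there are $i<j<k$ with $w(k)<w(i)<w(j)$. *)

(* Defs.v *)
From HB Require Import structures.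
From mathcomp Require Import all_boot all_order all_algebra all_fingroup.
From mathcomp Require Import mpoly.
Set Implicit Arguments. Unset Strict Implicit. Unset Printing Implicit Defensive.
Import GRing.Theory.
Local Open Scope ring_scope.

(* Polynomials in x_1..x_n are '{mpoly int[n]}'; variable x_(k+1) is 'X_k, k : 'I_n.
   Permutations w in S_n are {perm 'I_n}, acting on {0,..,n-1}. *)

Definition ell n (w : {perm 'I_n}) : nat :=
  #|[set p : 'I_n * 'I_n | (p.1 < p.2)%N && (w p.2 < w p.1)%N]|.

Definition contains231 n (w : {perm 'I_n}) : Prop :=
  exists i j k : 'I_n, [/\ (i < j)%N, (j < k)%N, (w k < w i)%N & (w i < w j)%N].

Definition w0 n : {perm 'I_n} := perm (@rev_ord_inj n).

Definition simple_tr n (i j : 'I_n) : {perm 'I_n} := tperm i j.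

Definition staircase n : {mpoly int[n]} := \prod_(k < n) 'X_k ^+ (n - k.+1)%N.

(* dd i j f g  <->  g = (f - s f) / (x_i - x_j), where s swaps x_i and x_j
   (used with j = i+1); i.e. g is the divided difference of f.
   Since {mpoly int[n]} is an integral domain, g is uniquely determined. *)
Definition is_ddiff n (i j : 'I_n) (f g : {mpoly int[n]}) : Prop :=
  ('X_i - 'X_j) * g = f - msym (simple_tr i j) f.

(* S is the family of Schubert polynomials of S_n:
   S_{w0} = x_1^{n-1}...x_{n-1}, and
   d_i S_w = S_{w s_i} if l(w s_i) = l(w) - 1, and 0 otherwise.
   (w s_i as a function is w o s_i, which is (s_i * w)%g in mathcomp.) *)
Definition is_schubert_family n (S : {perm 'I_n} -> {mpoly int[n]}) : Prop :=
  S (w0 n) = staircase n /\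
  forall (w : {perm 'I_n}) (i j : 'I_n), (i.+1 = j :> nat) ->
    let ws := (simple_tr i j * w)%g in
    is_ddiff i j (S w) (if (ell ws + 1 == ell w)%N then S ws else 0).

Definition hcomp n (i j : nat) : {mpoly int[n]} :=
  \sum_(m : 'X_{1..n < j.+1} |
        (mdeg m == j) && [forall k : 'I_n, (i <= k)%N ==> (m k == 0%N)]) 'X_[m].

Definition is_complete_hom_monomial n (p : {mpoly int[n]}) : Prop :=
  exists a : 'I_n -> nat, p = \prod_(k < n) hcomp n k.+1 (a k).

(* Main.v *)
Require Import Defs.
From HB Require Import structures.
From mathcomp Require Import all_boot all_algebra all_fingroup mpoly.
From mathcomp Require Import zify.
Set Implicit Arguments. Unset Strict Implicit. Unset Printing Implicit Defensive.

Section Comb.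
Variable n : nat.
Variable f : nat -> nat.
Hypothesis finj : forall x y, x < n -> y < n -> f x = f y -> x = y.

Lemma desc_between p r : p < r -> r < n -> f r < f p ->
  exists k, [/\ p <= k, k < r & f k.+1 < f k].
Proof.
elim: r => [//|r IH] hp hr hf.
case: (ltnP (f r.+1) (f r)) => h.
  by exists r; split => //; lia.
have [e|lt] : p = r \/ p < r by lia.
  by rewrite e in hf; lia.
have [k [h1 h2 h3]] := IH lt (ltnW hr) (leq_ltn_trans h hf).
by exists k; split => //; lia.
Qed.

Lemma run_end k : k.+1 < n -> f k.+1 < f k ->
  exists a, [/\ k <= a, a.+1 < n, f a.+1 < f a, (a.+2 = n \/ f a.+1 < f a.+2) &
    forall m, k <= m -> m <= a -> f m.+1 < f m].
Proof.
move: {2}(n - k) (erefl (n - k)) => d; elim: d k => [|d IH] k hd hk hf; first lia.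
have [e|lt] : k.+2 = n \/ k.+2 < n by lia.
  exists k; split => //; first by left.
  by move=> m h1 h2; have -> : m = k by lia.
case: (ltngtP (f k.+1) (f k.+2)) => h.
- exists k; split => //; first by right.
  by move=> m h1 h2; have -> : m = k by lia.
- have hd' : n - k.+1 = d by lia.
  have [a [h1 h2 h3 h4 h5]] := IH k.+1 hd' lt h.
  exists a; split; [lia | exact: h2 | exact: h3 | exact: h4 | ].
  move=> m hm1 hm2; have [->|lt'] : m = k \/ k < m by lia.
    exact: hf.
  by apply: h5 => //.
- by have := finj (ltnW lt) lt h; lia.
Qed.

Definition sw (x y : nat) := if y == x then x.+1 else if y == x.+1 then x else y.

Lemma swK x y : sw x (sw x y) = y.
Proof.
rewrite /sw; case: (y =P x) => [->|h1]; last case: (y =P x.+1) => [->|h2];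
  rewrite ?eqxx; repeat case: eqP => ? //=; lia.
Qed.

Lemma sw_id x y : y <> x -> y <> x.+1 -> sw x y = y.
Proof. by rewrite /sw => h1 h2; case: eqP => // ?; case: eqP. Qed.

Lemma sw_x x : sw x x = x.+1.
Proof. by rewrite /sw eqxx. Qed.

Lemma sw_lt x a b : a < b -> ~ (a = x /\ b = x.+1) -> sw x a < sw x b.
Proof. rewrite /sw => h1 h2; repeat case: eqP => ? //=; lia. Qed.

Lemma sw_ltn x y : x.+1 < n -> y < n -> sw x y < n.
Proof. rewrite /sw => h1 h2; repeat case: eqP => ? //=; lia. Qed.

Definition C231 (h : nat -> nat) :=
  exists p q r, [/\ p < q, q < r, r < n, h r < h p & h p < h q].

Lemma C231_sw (h : nat -> nat) x p q r : x.+1 < n ->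
  [/\ p < q, q < r, r < n, f r < f p & f p < f q] ->
  ~ (p = x /\ q = x.+1) -> ~ (q = x /\ r = x.+1) ->
  (forall y, y < n -> h y = f (sw x y)) ->
  C231 h.
Proof.
move=> hx [h1 h2 h3 h4 h5] hn1 hn2 hh.
exists (sw x p), (sw x q), (sw x r); rewrite !hh ?swK; try apply: sw_ltn; try lia.
by split => //; try apply: sw_lt; try apply: sw_ltn; try lia.
Qed.


Lemma incr_fix : (forall x, x < n -> f x < n) -> (forall x, x.+1 < n -> f x < f x.+1) ->
  forall x, x < n -> f x = x.
Proof.
move=> hb hi.
have lo : forall x, x < n -> x <= f x.
  elim=> [//|x IH] hx; have := IH (ltnW hx); have := hi x hx; lia.
have up : forall d, d < n -> f (n - d.+1) <= n - d.+1.
  elim=> [|d IH] hd; first by have := hb (n - 1); lia.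
  have := IH (ltnW hd); have := hi (n - d.+2); rewrite (_ : (n - d.+2).+1 = n - d.+1); try lia.
move=> x hx; have := lo x hx; have := up (n - x.+1) ltac:(lia).
rewrite (_ : n - (n - x.+1).+1 = x); lia.
Qed.

End Comb.

Section Stair.
Variable N : nat.
Variable c : nat -> nat.
Definition stair := forall x, x.+1 < N -> c x.+1 <= c x <= (c x.+1).+1.

Lemma first_drop : stair -> c N.-1 = 0 -> 0 < N -> 0 < c 0 ->
  exists i, [/\ i.+1 < N, c i = (c i.+1).+1 & forall m, m < i -> c m = c m.+1].
Proof.
move=> st hl hN h0.
pose P x := (x.+1 < N) && (c x != c x.+1).
have ex : exists x, P x.
  have : has P (iota 0 N).
    apply/negPn/negP => /hasPn hnone; move: h0; apply/negP; rewrite -leqNgt.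
    have e : forall x, x < N -> c x = c 0.
      elim=> [//|x IH] hx; have := hnone x; rewrite mem_iota /P hx /= negbK add0n => /(_ (ltnW hx)) /eqP <-.
      exact: IH (ltnW hx).
    by rewrite -(e N.-1) ?hl //; lia.
  by case/hasP => x _ px; exists x.
case: (ex_minnP ex) => i /andP[hi hne] hmin.
exists i; split => //.
- by have := st i hi; move: hne; case: eqP => //; lia.
- move=> m hm; apply/eqP; apply/negPn/negP => hne'.
  have := hmin m; rewrite /P hne' andbT; lia.
Qed.

End Stair.

Lemma stair_dec N (c : nat -> nat) i : stair N c -> i.+1 < N -> c i = (c i.+1).+1 ->
  (forall m, m < i -> c m = c m.+1) ->
  stair N (fun x => if x == i then (c x).-1 else c x).
Proof.
move=> st hi hd hm x hx /=; have := st x hx.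
case: (eqVneq x i) => [e|ne].
  subst x; have -> : (i.+1 == i) = false by apply/eqP; lia.
  by move=> _; rewrite hd /= leqnn leqnSn.
case: (eqVneq x.+1 i) => [e|ne2] //.
subst i; have := hm x (ltnSn x); rewrite hd /=; lia.
Qed.


Lemma stair_ext N (c c' : nat -> nat) : (forall x, x < N -> c x = c' x) ->
  stair N c -> stair N c'.
Proof. by move=> e st x hx; rewrite -!e //; [exact: st | lia]. Qed.

Lemma stair_mono N (c : nat -> nat) : stair N c -> forall x y, x <= y -> y < N -> c y <= c x.
Proof.
move=> st x; elim=> [|y IH] hxy hy; first by have -> : x = 0 by lia.
have [e|lt] : x = y.+1 \/ x <= y by lia.
  by rewrite e.
have := st y hy; have := IH lt (ltnW hy); lia.
Qed.

Lemma exact_down N (c : nat -> nat) : 0 < N -> c N.-1 = 0 ->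
  (forall x, x.+1 < N -> c x = (c x.+1).+1) -> forall x, x < N -> c x = N - x.+1.
Proof.
move=> hN hl hs x hx; move: {2}(N - x.+1) (erefl (N - x.+1)) => d.
elim: d x hx => [|d IH] x hx hd.
  have -> : x = N.-1 by lia.
  by rewrite hl prednK // subnn.
by rewrite hs ?(IH x.+1) //; lia.
Qed.

Import GRing.Theory.
Local Open Scope ring_scope.

Section Poly.
Variable n : nat.
Local Notation P := {mpoly int[n]}.

Definition hp (k d : nat) (m : 'X_{1..n}) : bool :=
  (mdeg m == d) && [forall l : 'I_n, (k <= l)%N ==> (m l == 0%N)].

Lemma hcomp_coef k d m : (hcomp n k d)@_m = (hp k d m)%:R.
Proof.
rewrite /hcomp raddf_sum /=.
under eq_bigr => m0 _ do rewrite mcoeffX.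
case hm: (hp k d m).
  have hb : (mdeg m < d.+1)%N by move: hm => /andP[/eqP -> _].
  rewrite (bigD1 (BMultinom hb)) /=; last by [].
  rewrite eqxx big1 ?addr0 // => m0 /andP[_ ne].
  case: eqP => // e; exfalso; move/negP: ne; apply.
  by apply/eqP/val_inj.
rewrite big1 // => m0 hm0; case: eqP => // e.
by move: hm; rewrite -e /hp hm0.
Qed.


Lemma tval (i j x : 'I_n) : i.+1 = j :> nat ->
  (tperm i j x : nat) = if x == i then j : nat else if x == j then i : nat else x.
Proof.
move=> hij; case: tpermP => [->|->|/eqP/negbTE -> /eqP/negbTE ->]; rewrite ?eqxx //.
by case: eqP => // e; move: hij; rewrite e; lia.
Qed.

Definition F k (m : 'X_{1..n}) := [forall l : 'I_n, (k <= l)%N ==> (m l == 0%N)].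

Lemma hpE k d m : hp k d m = (mdeg m == d) && F k m.
Proof. by []. Qed.

Lemma F_succ (i j : 'I_n) m : i.+1 = j :> nat -> F i.+1 m = (m j == 0%N) && F i.+2 m.
Proof.
move=> hij; apply/forallP/andP => [H|[/eqP H1 /forallP H2] l].
  split; first by have := H j; rewrite hij leqnn.
  by apply/forallP => l; apply/implyP => hl; have := H l; rewrite (ltnW hl).
apply/implyP => hl; rewrite leq_eqVlt in hl; case/orP: hl => [/eqP e|h]; last first.
  by have := H2 l; rewrite h.
by rewrite (_ : l = j) ?H1 //; apply: val_inj; rewrite /= -e hij.
Qed.

Lemma F_subU k (i : 'I_n) m : (i < k)%N -> F k (m - U_(i))%MM = F k m.
Proof.
move=> hik; apply: eq_forallb => l.
rewrite mnmBE mnm1E; case: (eqVneq i l) => [e|ne]; first by rewrite -e leqNgt hik.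
by rewrite subn0.
Qed.

Lemma F_perm (i j : 'I_n) (m : 'X_{1..n}) : i.+1 = j :> nat ->
  F i.+1 [multinom m (tperm i j l) | l < n] = (m i == 0%N) && F i.+2 m.
Proof.
move=> hij; rewrite (F_succ _ hij) mnmE tpermR; congr (_ && _).
apply: eq_forallb => l; case hl: (i.+2 <= l)%N => //=.
by rewrite mnmE tpermD //; apply/eqP => e; move: hl; rewrite -e; lia.
Qed.

Lemma mdeg_subU (i : 'I_n) (m : 'X_{1..n}) : (0 < m i)%N -> mdeg (m - U_(i))%MM = (mdeg m).-1.
Proof.
move=> hm; have le : (U_(i) <= m)%MM.
  by apply/mnm_lepP => l; rewrite mnm1E; case: eqP => [<-|]; rewrite ?hm.
by rewrite -{2}(submK le) mdegD mdeg1 addn1.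
Qed.

Lemma coefXM (i : 'I_n) (p : P) (m : 'X_{1..n}) :
  ('X_i * p)@_m = if (0 < m i)%N then p@_(m - U_(i))%MM else 0.
Proof.
case: ifP => hm.
  have le : (U_(i) <= m)%MM.
    by apply/mnm_lepP => l; rewrite mnm1E; case: eqP => [<-|]; rewrite ?hm.
  by rewrite -{1}(submK le) addmC mulrC mcoeffMX.
apply/eqP; rewrite mcoeff_eq0 mulrC (perm_mem (msuppMX _ _)); apply/negP.
case/mapP => m' _ e; move: hm; rewrite e mnmDE mnm1E eqxx.
by rewrite add1n.
Qed.


Lemma hsym (i j : 'I_n) k d : i.+1 = j :> nat -> k <> j :> nat ->
  msym (tperm i j) (hcomp n k d) = hcomp n k d.
Proof.
move=> hij hk.
have kt : forall l : 'I_n, (k <= l)%N -> (k <= tperm i j l)%N.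
  move=> l hl; rewrite tval //.
  case: eqP => [e|_]; first by rewrite e in hl; lia.
  case: eqP => [e|_] //; by rewrite e in hl; lia.
apply/mpolyP => m; rewrite mcoeff_sym !hcomp_coef !hpE mdeg_mperm.
congr ((_ && _)%:R); apply/forallP/forallP => H l; apply/implyP => hl.
  by have := H (tperm i j l); rewrite kt //= mnmE tpermK.
by have := H (tperm i j l); rewrite kt //= mnmE.
Qed.

Lemma le_mdeg (m : 'X_{1..n}) (i : 'I_n) : (m i <= mdeg m)%N.
Proof. by rewrite mdegE (bigD1 i) //= leq_addr. Qed.

Lemma hdd (i j : 'I_n) d : i.+1 = j :> nat ->
  ('X_i - 'X_j) * hcomp n i.+2 d = hcomp n i.+1 d.+1 - msym (tperm i j) (hcomp n i.+1 d.+1).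
Proof.
move=> hij; apply/mpolyP => m.
rewrite mulrBl !mcoeffB !coefXM mcoeff_sym !hcomp_coef !hpE mdeg_mperm (F_perm _ hij) (F_succ _ hij).
have E (l : 'I_n) : (l < i.+2)%N -> (0 < m l)%N ->
    ((mdeg (m - U_(l))%MM == d) && F i.+2 (m - U_(l))%MM) = (mdeg m == d.+1) && F i.+2 m.
  move=> hl hm; rewrite F_subU // mdeg_subU //.
  by have := le_mdeg m l; case: (mdeg m) => [|x]; [lia|].
case hi: (0 < m i)%N; case hj: (0 < m j)%N; rewrite ?E //; try lia;
  case: (mdeg m == d.+1); case: (F i.+2 m) => //=;
  move: hi hj; case: (m i); case: (m j) => //=.
Qed.

Lemma hnsym (i j : 'I_n) d : i.+1 = j :> nat -> (0 < d)%N ->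
  msym (tperm i j) (hcomp n i.+1 d) != hcomp n i.+1 d.
Proof.
move=> hij hd; apply/eqP => e.
have := congr1 (mcoeff (U_(i) *+ d)%MM) e.
rewrite mcoeff_sym !hcomp_coef !hpE mdeg_mperm (F_perm _ hij) (F_succ _ hij) mdegMn mdeg1 mul1n eqxx /=.
rewrite !mulmnE !mnm1E eqxx mul1n.
have -> : (i == j) = false by apply/eqP => e'; move: hij; rewrite e'; lia.
rewrite mul0n eqxx /=; case: eqP => [e'|_]; first lia.
have -> : F i.+2 (U_(i) *+ d)%MM.
  apply/forallP => l; apply/implyP => hl; rewrite mulmnE mnm1E.
  by case: (eqVneq i l) => [e'|_]; [rewrite -e' in hl; lia | rewrite mul0n].
by move=> /eqP; rewrite eq_sym oner_eq0.
Qed.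

Lemma hnz (i0 : 'I_n) k d : (i0 <= k)%N -> hcomp n k.+1 d != 0.
Proof.
move=> hk; apply/eqP => e; have := congr1 (mcoeff (U_(i0) *+ d)%MM) e.
rewrite hcomp_coef mcoeff0 hpE mdegMn mdeg1 mul1n eqxx /=.
have -> // : F k.+1 (U_(i0) *+ d)%MM.
apply/forallP => l; apply/implyP => hl; rewrite mulmnE mnm1E.
by case: (eqVneq i0 l) => [e'|_]; [rewrite -e' in hl; lia | rewrite mul0n].
Qed.

Lemma h0 k : hcomp n k 0 = 1.
Proof.
apply/mpolyP => m; rewrite hcomp_coef mcoeff1 hpE mdeg_eq0.
case: eqP => [->|] //=.
have -> // : F k 0%MM by apply/forallP => l; rewrite mnm0E eqxx implybT.
Qed.

Lemma mono_dd (i j : 'I_n) (e : 'X_{1..n}) : i.+1 = j :> nat -> e i = (e j).+1 ->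
  ('X_i - 'X_j) * 'X_[(e - U_(i))%MM] = 'X_[e] - msym (tperm i j) 'X_[e] :> P.
Proof.
move=> hij he; rewrite msymX tpermV mulrBl -!mpolyXD; congr ('X_[_] - 'X_[_]).
  apply/mnmP => l; rewrite !mnmE; case: eqP => [<-|]; last by rewrite subn0.
  by rewrite he /= add1n subn1.
apply/mnmP => l; rewrite !mnmE; case: tpermP => [->|->|ni nj].
- have -> : (j == i) = false by apply/eqP => e'; move: hij; rewrite e'; lia.
  by rewrite eqxx he add0n subn1.
- have -> : (i == j) = false by apply/eqP => e'; move: hij; rewrite e'; lia.
  by rewrite eqxx he add1n subn0.
- have -> : (i == l) = false by apply/eqP => e'; apply: ni; rewrite e'.
  have -> : (j == l) = false by apply/eqP => e'; apply: nj; rewrite e'.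
  by rewrite subn0.
Qed.

End Poly.

Section Perm.
Variable n : nat.

Lemma tvalN (i j x : 'I_n) : i.+1 = j :> nat ->
  (tperm i j x : nat) = if (x : nat) == i then j : nat else if (x : nat) == j then i : nat else x.
Proof.
move=> hij; case: tpermP => [->|->|ni nj]; rewrite ?eqxx //.
  by case: eqP => // e; move: hij; rewrite e; lia.
have -> : ((x : nat) == i) = false by apply/eqP => e; apply: ni; apply: val_inj.
have -> // : ((x : nat) == j) = false by apply/eqP => e; apply: nj; apply: val_inj.
Qed.

Definition Inv (u : {perm 'I_n}) : {set 'I_n * 'I_n} :=
  [set p : 'I_n * 'I_n | (p.1 < p.2)%N && (u p.2 < u p.1)%N].

Lemma ell_tr (i j : 'I_n) (u : {perm 'I_n}) : i.+1 = j :> nat ->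
  (ell (tperm i j * u)%g + (u j < u i)%N = ell u + (u i < u j)%N)%N.
Proof.
move=> hij.
set t := tperm i j.
have ellE v : ell v = #|Inv v| by [].
rewrite !ellE (cardsD1 (i, j) (Inv u)) (cardsD1 (i, j) (Inv (t * u)%g)) !inE /= !permM.
rewrite /t tpermL tpermR.
have hij' : (i < j)%N by rewrite -hij.
rewrite hij' /=.
pose phi (p : 'I_n * 'I_n) := (t p.1, t p.2).
have phiK : involutive phi by move=> [a b]; rewrite /phi /= !tpermK.
have -> : Inv (t * u)%g :\ (i, j) = phi @^-1: (Inv u :\ (i, j)).
  apply/setP => [[a b]]; rewrite !inE /= !permM /=.
  case: (u (t b) < u (t a))%N; rewrite ?andbF //.
  rewrite !xpair_eqE -!val_eqE /= /t !tvalN //.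
  by repeat (case: ifP => /eqP ?); repeat (case: eqP => ?); rewrite /= ?andbT; lia.
rewrite card_preimset; last exact: (can_inj phiK).
by case: (u i < u j)%N; case: (u j < u i)%N => /=; rewrite ?addn0 ?add0n // addnC.
Qed.

End Perm.

Section Schub.
Variable n' : nat.
Local Notation n := n'.+1.
Local Notation P := {mpoly int[n]}.
Variable S : {perm 'I_n} -> P.
Hypothesis HS : is_schubert_family S.

Lemma Xdiff_nz (i j : 'I_n) : i.+1 = j :> nat -> ('X_i - 'X_j : P) != 0.
Proof.
move=> hij; apply/eqP => e; have := congr1 (mcoeff U_(i)) e.
rewrite mcoeffB !mcoeffX eqxx mcoeff0.
have -> : (U_(j) == U_(i))%MM = false.
  apply/eqP => /mnmP /(_ i); rewrite !mnm1E eqxx.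
  by case: eqP => // e'; move: hij; rewrite e'; lia.
by rewrite subr0 => /eqP; rewrite oner_eq0.
Qed.

Lemma HSdes (u : {perm 'I_n}) (i j : 'I_n) : i.+1 = j :> nat -> (u j < u i)%N ->
  ('X_i - 'X_j) * S (tperm i j * u)%g = S u - msym (tperm i j) (S u).
Proof.
move=> hij hd; have := (proj2 HS) u i j hij; rewrite /is_ddiff /simple_tr /=.
have := ell_tr u hij; rewrite hd.
have -> : (u i < u j)%N = false by apply/negbTE; rewrite -leqNgt ltnW.
by rewrite addn0 => ->; rewrite eqxx.
Qed.

Lemma HSasc (u : {perm 'I_n}) (i j : 'I_n) : i.+1 = j :> nat -> (u i < u j)%N ->
  msym (tperm i j) (S u) = S u.
Proof.
move=> hij ha; have := (proj2 HS) u i j hij; rewrite /is_ddiff /simple_tr /=.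
have := ell_tr u hij; rewrite ha.
have -> : (u j < u i)%N = false by apply/negbTE; rewrite -leqNgt ltnW.
rewrite addn0 => ->.
have -> : (ell u + 1 + 1 == ell u)%N = false by apply/eqP; lia.
rewrite mulr0.
by move/eqP; rewrite eq_sym subr_eq0 => /eqP.
Qed.


Definition symm (p : P) := forall i j : 'I_n, i.+1 = j :> nat -> msym (tperm i j) p = p.
Definition PH (c : 'I_n -> nat) : P := \prod_(k < n) hcomp n k.+1 (c k).
Definition upd (c : 'I_n -> nat) (a : 'I_n) (v : nat) := fun k => if k == a then v else c k.

Lemma PH_ext c c' : c =1 c' -> PH c = PH c'.
Proof. by move=> e; apply: eq_bigr => k _; rewrite e. Qed.

Lemma PH_split (a : 'I_n) c : PH c = hcomp n a.+1 (c a) * PH (upd c a 0).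
Proof.
rewrite /PH (bigD1 a) //= [in RHS](bigD1 a) //= /upd eqxx h0 mul1r; congr (_ * _).
by apply: eq_bigr => k /negbTE ->.
Qed.

Lemma PH_sym (i j : 'I_n) c : i.+1 = j :> nat -> c i = 0%N ->
  msym (tperm i j) (PH c) = PH c.
Proof.
move=> hij ci; rewrite /PH rmorph_prod; apply: eq_bigr => k _.
case: (eqVneq k i) => [->|ne]; first by rewrite ci h0 rmorph1.
apply: hsym => // e; move/eqP: ne; apply; apply: val_inj => /=; lia.
Qed.

Lemma PH_nz c : PH c != 0.
Proof. apply/prodf_neq0 => k _. exact: (@hnz _ k k (c k) (leqnn _)). Qed.

Definition state u Z c := S u = Z * PH c /\ symm Z /\ Z != 0.

Lemma split_state u Z c (i : 'I_n) : state u Z c ->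
  let Q := Z * PH (upd c i 0) in
  [/\ S u = Q * hcomp n i.+1 (c i), Q != 0 &
    forall j : 'I_n, i.+1 = j :> nat -> msym (tperm i j) Q = Q].
Proof.
move=> [hS [sZ nZ]] Q; split.
- by rewrite hS (PH_split i) mulrCA mulrC.
- by rewrite mulf_neq0 // PH_nz.
- move=> j hij; rewrite msymM sZ // PH_sym //.
  by rewrite /upd eqxx.
Qed.

Lemma winL3 u Z c (i j : 'I_n) : state u Z c -> i.+1 = j :> nat -> (u i < u j)%N ->
  (0 < c i)%N -> False.
Proof.
move=> st hij ha hc; have [hS nQ sQ] := split_state i st.
have := HSasc hij ha; rewrite hS msymM sQ // => /(mulfI nQ) /eqP.
by apply/negP; apply: hnsym.
Qed.

Lemma winZ u Z c (i j : 'I_n) : state u Z c -> i.+1 = j :> nat -> (u j < u i)%N ->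
  c i = 0%N -> S (tperm i j * u)%g = 0.
Proof.
move=> [hS [sZ nZ]] hij hd hc; have := HSdes hij hd.
rewrite hS msymM sZ // PH_sym // subrr => /eqP; rewrite mulf_eq0.
by rewrite (negbTE (Xdiff_nz hij)) => /eqP.
Qed.

Lemma move_state u Z c (i j : 'I_n) : state u Z c -> i.+1 = j :> nat -> (u j < u i)%N ->
  (0 < c i)%N -> c j = 0%N -> state (tperm i j * u)%g Z (upd (upd c i 0) j (c i).-1).
Proof.
move=> st hij hd hc hcj; have [hS nQ sQ] := split_state i st.
have [_ [sZ nZ]] := st.
set Q := Z * PH (upd c i 0) in hS nQ sQ.
have ci : c i = ((c i).-1).+1 by rewrite prednK.
have E : S (tperm i j * u)%g = Q * hcomp n i.+2 (c i).-1.
  apply: (mulfI (Xdiff_nz hij)); rewrite HSdes // hS msymM sQ // -mulrBr.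
  by rewrite mulrCA; congr (_ * _); rewrite (hdd _ hij) -ci.
split; last by split.
rewrite E /Q -mulrA; congr (_ * _).
rewrite [in RHS](PH_split j) /upd eqxx mulrC -hij; congr (_ * _).
apply: PH_ext => k; case: (eqVneq k j) => [->|//].
have -> : (j == i) = false by apply/eqP => e; move: hij; rewrite e; lia.
by rewrite hcj.
Qed.

Lemma norm_state u Z c (l : 'I_n) : state u Z c -> l.+1 = n ->
  state u (Z * hcomp n n (c l)) (upd c l 0).
Proof.
move=> [hS [sZ nZ]] hl; split; last split.
- by rewrite hS (PH_split l) hl mulrA.
- move=> i j hij; rewrite msymM sZ // hsym //; have := ltn_ord j; lia.
- by rewrite mulf_neq0 // (@hnz _ ord0 n').
Qed.

End Schub.

Section Game.
Variable n' : nat.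
Local Notation n := n'.+1.
Local Notation P := {mpoly int[n]}.
Variable S : {perm 'I_n} -> P.
Hypothesis HS : is_schubert_family S.
Hypothesis NZ : forall v, S v != 0.

Definition g (u : {perm 'I_n}) (x : nat) : nat := u (inord x).
Definition tr (x : nat) : {perm 'I_n} := tperm (inord x) (inord x.+1).

Lemma hij_of x : (x.+1 < n)%N -> (inord x : 'I_n).+1 = (inord x.+1 : 'I_n) :> nat.
Proof. by move=> h; rewrite !inordK //; lia. Qed.

Lemma g_inj u : forall x y, (x < n)%N -> (y < n)%N -> g u x = g u y -> x = y.
Proof.
move=> x y hx hy h; have := perm_inj (val_inj h) => /(congr1 (@nat_of_ord _)).
by rewrite !inordK.
Qed.

Lemma g_tr u x y : (x.+1 < n)%N -> (y < n)%N -> g (tr x * u)%g y = g u (sw x y).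
Proof.
move=> hx hy; rewrite /g permM; congr (nat_of_ord (u _)); apply: ord_inj.
rewrite /tr tvalN ?hij_of // !inordK ?sw_ltn //; try lia.
Qed.

Lemma c231_g u : contains231 u <-> C231 n (g u).
Proof.
split.
- move=> [i [j [k [h1 h2 h3 h4]]]]; exists i, j, k; rewrite /g !inord_val; split => //.
- move=> [p [q [r [h1 h2 h3 h4 h5]]]]; exists (inord p), (inord q), (inord r).
  rewrite /g in h4 h5; rewrite !inordK //; lia.
Qed.

Lemma ell_dec u x : (x.+1 < n)%N -> (g u x.+1 < g u x)%N -> (ell (tr x * u)%g + 1 = ell u)%N.
Proof.
move=> hx hd; have := ell_tr u (hij_of hx); rewrite -/(tr x).
rewrite /g in hd; rewrite hd.
have -> : (u (inord x) < u (inord x.+1))%N = false by apply/negbTE; rewrite -leqNgt ltnW.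
by rewrite addn0.
Qed.

Lemma do_move u Z c x : (x.+1 < n)%N -> (g u x.+1 < g u x)%N ->
  (x.+2 = n \/ (g u x.+1 < g u x.+2)%N) -> state S u Z c ->
  exists Z' c', state S (tr x * u)%g Z' c' /\
    (forall y : 'I_n, (y : nat) <> x -> (y : nat) <> x.+1 -> c' y = c y).
Proof.
move=> hx hd hleg st.
have hij := hij_of hx.
have hd' : (u (inord x.+1) < u (inord x))%N by [].
case: (posnP (c (inord x))) => hc.
  by have := winZ HS st hij hd' hc; move/eqP; rewrite (negbTE (NZ _)).
have hne : (inord x : 'I_n) != inord x.+1.
  by apply/eqP => /(congr1 (@nat_of_ord _)) /=; rewrite !inordK; lia.
have hupd (c0 : 'I_n -> nat) v0 v1 (y : 'I_n) : (y : nat) <> x -> (y : nat) <> x.+1 ->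
    upd (upd c0 (inord x) v0) (inord x.+1) v1 y = c0 y.
  move=> h1 h2; rewrite /upd.
  have -> : (y == inord x.+1) = false by apply/eqP => /(congr1 (@nat_of_ord _)); rewrite inordK; lia.
  have -> : (y == inord x) = false by apply/eqP => /(congr1 (@nat_of_ord _)); rewrite inordK; lia.
  by [].
case: (eqVneq x.+2 n) => [e|ne].
- have hl : (inord x.+1 : 'I_n).+1 = n by rewrite inordK; lia.
  have st1 := norm_state st hl.
  have hc1 : (0 < upd c (inord x.+1) 0 (inord x))%N by rewrite /upd (negbTE hne).
  have c1j : upd c (inord x.+1) 0 (inord x.+1) = 0%N by rewrite /upd eqxx.
  have st4 := move_state HS st1 hij hd' hc1 c1j.
  do 2 eexists; split; first exact: st4.
  move=> y h1 h2; rewrite hupd //.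
  rewrite /upd.
  have -> // : (y == inord x.+1) = false by apply/eqP => /(congr1 (@nat_of_ord _)); rewrite inordK; lia.
- have hx2 : (x.+2 < n)%N by lia.
  have ha : (g u x.+1 < g u x.+2)%N by case: hleg => // e; rewrite e eqxx in ne.
  have hjk := hij_of hx2.
  case: (posnP (c (inord x.+1))) => hcj; last first.
    by exfalso; exact: (winL3 HS st hjk ha hcj).
  have st4 := move_state HS st hij hd' hc hcj.
  do 2 eexists; split; first exact: st4.
  by move=> y h1 h2; rewrite hupd.
Qed.


Lemma step u Z c : state S u Z c -> C231 n (g u) ->
  exists u' Z' c', (ell u' + 1 = ell u)%N /\ state S u' Z' c' /\ C231 n (g u').
Proof.
move=> st [p [q [r [h1 h2 h3 h4 h5]]]].
have inj := g_inj (u := u).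
have [k0 [k1 k2 k3]] := desc_between h2 h3 (ltn_trans h4 h5).
have k0n : (k0.+1 < n)%N by lia.
have [a [a1 a2 a3 a4 a5]] := run_end inj k0n k3.
case: (boolP ((a == q) && (r == q.+1))) => [/andP[/eqP ea /eqP er]|/negP hna]; last first.
  have [Z' [c' [st' _]]] := do_move a2 a3 a4 st.
  exists (tr a * u)%g, Z', c'; split; first exact: ell_dec a2 a3.
  split => //; apply: (C231_sw (f := g u) (x := a) (p := p) (q := q) (r := r)) => //.
  - lia.
  - by move=> [e1 e2]; apply: hna; rewrite e1 e2 !eqxx.
  - by move=> y hy; exact: g_tr.
have [y ey] : exists y, q = y.+1 by exists q.-1; lia.
subst q r a.
case: (ltngtP (g u y.+1) (g u y)) => hyq.
-
  have [Z' [c' [st' _]]] := do_move a2 a3 a4 st.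
  exists (tr y.+1 * u)%g, Z', c'; split; first exact: ell_dec a2 a3.
  split => //.
  have py : p <> y by move=> e; rewrite e in h5; lia.
  exists p, y, y.+1; rewrite !g_tr //; try lia.
  rewrite (sw_id (x := y.+1) (y := p)); try lia.
  rewrite (sw_id (x := y.+1) (y := y)); try lia.
  rewrite sw_x.
  split; lia.
-
  case: (ltngtP (g u y.+2) (g u y)) => hyr.
  +
    case: (posnP (c (inord y))) => hcy; last first.
      by exfalso; exact: (winL3 HS st (hij_of (x := y) ltac:(lia)) hyq hcy).
    have [Z' [c' [st' hc']]] := do_move a2 a3 a4 st.
    exfalso.
    have hc0 : c' (inord y) = 0%N by rewrite hc' ?inordK; lia.
    have hd : (g (tr y.+1 * u)%g y.+1 < g (tr y.+1 * u)%g y)%N.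
      rewrite !g_tr //; try lia.
      rewrite (sw_id (x := y.+1) (y := y)); try lia.
      by rewrite sw_x.
    have := winZ HS st' (hij_of (x := y) ltac:(lia)) hd hc0.
    by move/eqP; rewrite (negbTE (NZ _)).
  +
    have py : p <> y by move=> e; rewrite e in h4; lia.
    have hpy : (p < y)%N by lia.
    have hyn : (y < n)%N by lia.
    have hfy : (g u y < g u p)%N by lia.
    have [k' [k'1 k'2 k'3]] := desc_between hpy hyn hfy.
    have k'n : (k'.+1 < n)%N by lia.
    have [b [b1 b2 b3 b4 b5]] := run_end inj k'n k'3.
    have by' : (b < y)%N.
      case: (ltnP b y) => // hb; have := b5 y ltac:(lia) hb; lia.
    have [Z' [c' [st' _]]] := do_move b2 b3 b4 st.
    exists (tr b * u)%g, Z', c'; split; first exact: ell_dec b2 b3.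
    split => //; apply: (C231_sw (f := g u) (x := b) (p := p) (q := y.+1) (r := y.+2)) => //.
    * lia.
    * lia.
    * by move=> z hz; exact: g_tr.
  + by have := inj y.+2 y ltac:(lia) ltac:(lia) hyr; lia.
- by have := inj y.+1 y ltac:(lia) ltac:(lia) hyq; lia.
Qed.

Lemma game k : forall u Z c, (ell u <= k)%N -> state S u Z c -> contains231 u -> False.
Proof.
elim: k => [|k IH] u Z c hl st /c231_g h; have [u' [Z' [c' [e [st' h']]]]] := step st h.
  lia.
by apply: (IH u' Z' c') => //; [lia | exact/c231_g].
Qed.

End Game.

Section NonVan.
Variable n' : nat.
Local Notation n := n'.+1.
Local Notation P := {mpoly int[n]}.
Variable S : {perm 'I_n} -> P.
Hypothesis HS : is_schubert_family S.

Lemma exists_desc (v : {perm 'I_n}) : v != 1%g ->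
  exists x, (x.+1 < n)%N /\ (g v x.+1 < g v x)%N.
Proof.
move=> hv.
have : has (fun x => g v x.+1 < g v x)%N (iota 0 n').
  apply/negPn/negP => /hasPn hn; move/eqP: hv; apply; apply/permP => a; apply: val_inj.
  rewrite perm1 /=.
  have := @incr_fix n (g v) _ _ a (ltn_ord a); rewrite /g inord_val => -> //.
  move=> x hx; have := hn x; rewrite mem_iota add0n => /(_ ltac:(lia)).
  rewrite -leqNgt leq_eqVlt => /orP[/eqP e|//].
  by have := g_inj (u := v) (x := x) (y := x.+1) ltac:(lia) hx e; lia.
by case/hasP => x; rewrite mem_iota => hx hd; exists x; split => //; lia.
Qed.

Lemma zero_down k : forall v, (ell v <= k)%N -> S v = 0 -> S 1%g = 0.
Proof.
elim: k => [|k IH] v hl hz.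
  case: (eqVneq v 1%g) => [e|hv]; first by rewrite -e.
  by have [x [hx hd]] := exists_desc hv; have := ell_dec hx hd; lia.
case: (eqVneq v 1%g) => [e|hv]; first by rewrite -e.
have [x [hx hd]] := exists_desc hv; have e := ell_dec hx hd.
apply: (IH (@tr n' x * v)%g); first lia.
have := HSdes HS (hij_of hx) hd; rewrite hz msym0 subr0 => /eqP.
by rewrite mulf_eq0 (negbTE (Xdiff_nz (hij_of hx))) => /eqP.
Qed.


Definition code (u : {perm 'I_n}) (a : 'I_n) : nat :=
  #|[set b : 'I_n | (a < b)%N && (u b < u a)%N]|.

Lemma code_tr (u : {perm 'I_n}) (i j a : 'I_n) : i.+1 = j :> nat -> (u j < u i)%N ->
  code (tperm i j * u)%g a =
    if a == i then code u j else if a == j then (code u i).-1 else code u a.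
Proof.
move=> hij hd; rewrite /code permM.
case: (eqVneq a i) => [->|ni].
  rewrite tpermL; apply: eq_card => b; rewrite !inE permM.
  have hb : (i < b)%N = ((b : nat) == j) || (j < b)%N by rewrite -hij; apply/idP/orP; lia.
  case: tpermP => [->|->|nb1 nb2].
  - by rewrite ltnn /= -hij ltnNge leqnSn.
  - have -> : (u i < u j)%N = false by apply/negbTE; rewrite -leqNgt ltnW.
    by rewrite ltnn !andbF.
  - rewrite hb; have -> // : ((b : nat) == j) = false.
    by apply/eqP => e; apply: nb2; apply: val_inj.
case: (eqVneq a j) => [->|nj].
  have jin : j \in [set b : 'I_n | (i < b)%N && (u b < u i)%N] by rewrite inE -hij ltnSn hd.
  rewrite tpermR (cardsD1 j [set b : 'I_n | (i < b)%N && (u b < u i)%N]) jin add1n /=.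
  apply: eq_card => b; rewrite !inE permM.
  case: tpermP => [->|->|nb1 nb2].
  - by rewrite ltnn /= andbF -hij ltnNge leqnSn.
  - by rewrite eqxx ltnn.
  - have nb2' : (b : nat) <> j by move=> e; apply: nb2; apply: val_inj.
    have -> : (b != j) = true by apply/eqP.
    by rewrite /=; congr (_ && _); apply/idP/idP => h; lia.
rewrite tpermD; [|by rewrite eq_sym|by rewrite eq_sym].
transitivity #|tperm i j @^-1: [set b : 'I_n | (a < b)%N && (u b < u a)%N]|; last first.
  by apply: card_preimset; exact: perm_inj.
apply: eq_card => b; rewrite !inE permM; congr (_ && _).
rewrite (tvalN _ hij); case: eqP => [e|_].
  apply/idP/idP => h; move: ni nj h; rewrite -!(inj_eq val_inj) /= e -hij; lia.
case: eqP => [e|_] //.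
apply/idP/idP => h; move: ni nj h; rewrite -!(inj_eq val_inj) /= e -hij; lia.
Qed.


Lemma code_asc (u : {perm 'I_n}) (i j : 'I_n) : i.+1 = j :> nat -> (u i < u j)%N ->
  (code u i <= code u j)%N.
Proof.
move=> hij ha; apply: subset_leq_card; apply/subsetP => b; rewrite !inE => /andP[h1 h2].
rewrite (ltn_trans h2 ha) andbT ltn_neqAle -hij h1 andbT.
apply/eqP => e; have e' : b = j by apply: val_inj; rewrite /= -e hij.
by rewrite e' in h2; lia.
Qed.

Lemma code_last (u : {perm 'I_n}) (l : 'I_n) : (l : nat) = n' -> code u l = 0%N.
Proof.
move=> hl; apply: eq_card0 => b; rewrite !inE hl.
by have := ltn_ord b; rewrite ltnS leqNgt => /negbTE ->.
Qed.

Lemma gcode_last u : code u (inord n') = 0%N.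
Proof. by apply: code_last; rewrite inordK. Qed.

Definition cn (u : {perm 'I_n}) (x : nat) := code u (inord x).

Lemma code0_id (u : {perm 'I_n}) : (forall x, (x < n)%N -> cn u x = 0%N) -> u = 1%g.
Proof.
move=> h0; apply/permP => a; apply: val_inj; rewrite perm1 /=.
have := @incr_fix n (g u) _ _ a (ltn_ord a); rewrite /g inord_val => -> //.
move=> x hx; have := h0 x (ltnW hx); rewrite /cn /code => /eqP; rewrite cards_eq0 => /eqP/setP/(_ (inord x.+1)).
rewrite !inE !inordK ?ltnSn //=; try lia.
rewrite ltnNge leq_eqVlt => /negbT; rewrite negbK => /orP[/eqP e|//].
by have := g_inj (u := u) (x := x) (y := x.+1) ltac:(lia) hx e; lia.
Qed.

Lemma mX_nz (m : 'X_{1..n}) : ('X_[m] : P) != 0.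
Proof.
apply/eqP => e; have := congr1 (mcoeff m) e; rewrite mcoeffX eqxx mcoeff0.
by move/eqP; rewrite oner_eq0.
Qed.

Definition mcode u : 'X_{1..n} := [multinom code u a | a < n].

Lemma inord_eqE (y i : nat) : (y < n)%N -> (i < n)%N -> ((inord y : 'I_n) == inord i) = (y == i).
Proof.
move=> hy hi; apply/eqP/eqP => [/(congr1 (@nat_of_ord _))|->//].
by rewrite !inordK.
Qed.

Lemma chain_step u x : stair n (cn u) -> S u = 'X_[mcode u] -> (x < n)%N -> (0 < cn u x)%N ->
  exists u', [/\ (ell u' + 1 = ell u)%N, stair n (cn u') & S u' = 'X_[mcode u']].
Proof.
move=> st hS hx hpos.
have c0 : (0 < cn u 0)%N by have := stair_mono st (leq0n x) hx; lia.
have cl : cn u n.-1 = 0%N by rewrite /cn /= gcode_last.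
have [i [hi hdrop hm]] := first_drop st cl (ltn0Sn _) c0.
have hij := hij_of hi.
have hd : (g u i.+1 < g u i)%N.
  case: (ltngtP (g u i.+1) (g u i)) => // h.
    by have := code_asc hij h; rewrite -/(cn u i) -/(cn u i.+1) hdrop; lia.
  by have := g_inj (u := u) (x := i.+1) (y := i) hi ltac:(lia) h; lia.
have hd' : (u (inord i.+1) < u (inord i))%N by [].
have hd2 : code u (inord i) = (code u (inord i.+1)).+1 by exact: hdrop.
have hc : forall y, (y < n)%N -> cn (tr n' i * u)%g y = if y == i then (cn u y).-1 else cn u y.
  move=> y hy; rewrite /cn /tr code_tr // !inord_eqE //; try lia.
  case: (eqVneq y i) => [->|ne]; first by rewrite hd2.
  by case: (eqVneq y i.+1) => [->|ne2] //; rewrite hd2.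
exists (tr n' i * u)%g; split.
- exact: ell_dec hi hd.
- apply: (stair_ext (c := fun y => if y == i then (cn u y).-1 else cn u y)).
    by move=> y hy; rewrite hc.
  exact: stair_dec st hi hdrop hm.
- have he : mcode (tr n' i * u)%g = (mcode u - U_(inord i))%MM.
    apply/mnmP => a; rewrite !mnmE /tr code_tr //.
    have [ea|na] := eqVneq a (inord i).
      by rewrite ea hd2 subn1.
    rewrite subn0; case: eqP => [->|_] //.
    by rewrite hd2.
  rewrite he; apply: (mulfI (Xdiff_nz hij)).
  rewrite HSdes // hS mono_dd // !mnmE -/(cn u i) -/(cn u i.+1) hdrop //.
Qed.

Lemma chain k : forall u, (ell u <= k)%N -> stair n (cn u) -> S u = 'X_[mcode u] -> S 1%g != 0.
Proof.
elim: k => [|k IH] u hl st hS.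
  case: (boolP [forall a : 'I_n, code u a == 0%N]) => H.
    have e1 : u = 1%g.
      by apply: code0_id => x hx; move/forallP: H => /(_ (inord x)) /eqP.
    by rewrite -e1 hS mX_nz.
  move/forallPn: H => [a ha].
  have [u' [e _ _]] := chain_step (x := a) st hS (ltn_ord a) ltac:(rewrite /cn inord_val lt0n //).
  lia.
case: (boolP [forall a : 'I_n, code u a == 0%N]) => H.
  have e1 : u = 1%g.
    by apply: code0_id => x hx; move/forallP: H => /(_ (inord x)) /eqP.
  by rewrite -e1 hS mX_nz.
move/forallPn: H => [a ha].
have [u' [e st' hS']] := chain_step (x := a) st hS (ltn_ord a) ltac:(rewrite /cn inord_val lt0n //).
by apply: (IH u') => //; lia.
Qed.

End NonVan.

Section Final.
Variable n' : nat.
Local Notation n := n'.+1.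
Local Notation P := {mpoly int[n]}.
Variable S : {perm 'I_n} -> P.
Hypothesis HS : is_schubert_family S.

Lemma w0E (a : 'I_n) : (w0 n a : nat) = (n - a.+1)%N.
Proof. by rewrite /w0 permE. Qed.

Lemma cn_w0_rec x : (x.+1 < n)%N -> cn (w0 n) x = (cn (w0 n) x.+1).+1.
Proof.
move=> hx; rewrite /cn /code.
rewrite (cardsD1 (inord x.+1)) !inE !w0E !inordK; try lia.
rewrite ltnSn /=.
have -> : (n - x.+2 < n - x.+1)%N by lia.
rewrite add1n; congr _.+1; apply: eq_card => b; rewrite !inE !w0E.
have := ltn_ord b; case: (eqVneq b (inord x.+1)) => [->|ne] /=.
  by rewrite inordK; lia.
have ne' : (b : nat) <> x.+1 by move=> e; move/eqP: ne; apply; apply: val_inj; rewrite /= inordK.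
move=> hb; apply/idP/idP => /andP[h1 h2]; apply/andP; split; lia.
Qed.

Lemma cn_w0 x : (x < n)%N -> cn (w0 n) x = (n - x.+1)%N.
Proof.
apply: exact_down => //; first by rewrite /cn gcode_last.
exact: cn_w0_rec.
Qed.

Lemma stair_w0 : stair n (cn (w0 n)).
Proof. by move=> x hx; rewrite (cn_w0_rec hx) leqnSn leqnn. Qed.

Lemma S_w0 : S (w0 n) = 'X_[mcode (w0 n)].
Proof.
rewrite (proj1 HS) /staircase mpolyXE_id; apply: eq_bigr => k _.
by rewrite mnmE -(inord_val k) -/(cn _ k) cn_w0 // inord_val.
Qed.

Lemma NZall v : S v != 0.
Proof.
apply/eqP => hv; have := zero_down HS (leqnn (ell v)) hv.
apply/eqP; exact: (chain HS (leqnn _) stair_w0 S_w0).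
Qed.

End Final.

Theorem lemma20 (n : nat) (S : {perm 'I_n} -> {mpoly int[n]})
  (HS : is_schubert_family S) (w : {perm 'I_n}) :
  contains231 w -> ~ is_complete_hom_monomial (S w).
Proof.
case: n S HS w => [|n'] S HS w.
  by move=> [i _]; case: i.
move=> h231 [a ha].
have st : state S w 1 a.
  split; first by rewrite mul1r.
  split; last exact: oner_neq0.
  by move=> i j _; rewrite msym1.
exact: (game HS (NZall HS) (leqnn (ell w)) st h231).
Qed.
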